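(* Let $G_0$ be a non-abelian finite simple group and let $(G_n)_{n\geq1}$ be a sequence of finite groups such that every finite group is isomorphic to a subgroup of at least one $G_n$. Then the family of all finite groups $\Gamma$ that are extensions of $G_0^N$ by $G_n$ (indexed by $n\ge1$ and $N\ge1$) satisfies property (RÉAL): for every finite group $G$ there exist integers $n\ge1$, $N\ge1$, a group $\Gamma$ fitting in an exact sequence $1\to G_0^N\to\Gamma\to G_n\to1$, and a subgroup $H\le\Gamma$ with $N_\Gamma(H)/H\cong G$.
   Context: A group $\Gamma$ is called an extension of a group $N$ by a group $H$ if there is an exact sequence $1\to N\to\Gamma\to H\to1$. A family $\{\Gamma_i\}_{i}$ of finite groups satisfies property (RÉAL) if for every finite group $G$ there exist an index $i$ and a subgroup $H$ of $\Gamma_i$ with $N_{\Gamma_i}(H)/H\cong G$, where $N_{\Gamma_i}(H)$ is the normalizer of $H$ in $\Gamma_i$. *)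

(* Defs.v *)
From HB Require Import structures.
From mathcomp Require Import all_boot all_order all_fingroup all_solvable.
Set Implicit Arguments. Unset Strict Implicit. Unset Printing Implicit Defensive.

(* The external direct power gT^N, i.e. functions 'I_N -> gT with pointwise
   multiplication (finGroupType instance from mathcomp's gproduct.v). *)
Definition gpow (gT : finGroupType) (N : nat) : finGroupType :=
  {dffun forall i : 'I_N, (fun _ : 'I_N => gT) i}.

(* Main.v *)
From HB Require Import structures.
From mathcomp Require Import all_boot all_order all_fingroup all_solvable.
Set Implicit Arguments. Unset Strict Implicit. Unset Printing Implicit Defensive.
Require Import Defs.
Local Open Scope group_scope.
Section C.
Variables (g0T kT : finGroupType).
Definition Af : finGroupType := {dffun forall i : kT, (fun _ : kT => g0T) i}.
Definition tof (f : Af) (k : kT) : Af := [ffun x => f (x * k^-1)].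
Lemma tof1 : tof^~ 1 =1 id.
Proof. by move=> f; apply/ffunP=> x; rewrite ffunE invg1 mulg1. Qed.
Lemma tofM : forall f, act_morph tof f.
Proof. by move=> f a b; apply/ffunP=> x; rewrite !ffunE invMg mulgA. Qed.
Canonical tof_action := TotalAction tof1 tofM.
Lemma tof_is_groupAction : is_groupAction [set: Af] tof_action.
Proof.
move=> a _; rewrite inE; apply/andP; split; first by apply/subsetP=> x /[1!inE].
apply/morphicP=> x y _ _; rewrite !actpermE /=.
by apply/ffunP=> z; rewrite !ffunE.
Qed.
Canonical tof_groupAction := GroupAction tof_is_groupAction.
Definition Gam := sdprod_by tof_groupAction.

Lemma conjg_Af (f x : Af) w : (f ^ x) w = (f w) ^ (x w).
Proof. by rewrite /conjg !ffunE. Qed.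
Lemma tofE (f : Af) k w : tof f k w = f (w * k^-1).
Proof. by rewrite ffunE. Qed.

Definition psi (g : gpow g0T #|kT|) : Af := [ffun x => g (enum_rank x)].
Lemma psiM : {in [set: gpow g0T #|kT|] &, {morph psi : x y / x * y}}.
Proof. by move=> x y _ _; apply/ffunP=> z; rewrite !ffunE. Qed.
Canonical psi_morphism := Morphism psiM.
Lemma Af_gpow : [set: Af] \isog [set: gpow g0T #|kT|].
Proof.
apply/isog_symr/isogP; exists psi_morphism.
  apply/injmP=> g g' _ _ E; apply/ffunP=> i.
  have := congr1 (fun f : Af => f (enum_val i)) E; rewrite /= !ffunE.
  by rewrite enum_valK.
apply/eqP; rewrite eqEsubset subsetT /=; apply/subsetP=> f _.
apply/morphimP; exists ([ffun i => f (enum_val i)] : gpow g0T #|kT|); rewrite ?in_setT //.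
by apply/ffunP=> x; rewrite /= !ffunE enum_rankK.
Qed.

Variable K : {group kT}.
Definition HA : {set Af} :=
  [set f : Af | [forall x, forall z, (x \notin K) ==> (z * x^-1 \in K) ==> (f x == f z)]].
Lemma HAP (f : Af) : reflect (forall x z, x \notin K -> z * x^-1 \in K -> f x = f z) (f \in HA).
Proof.
rewrite inE; apply: (iffP forallP) => [H x z xK zx | H x].
  by move: (forallP (H x) z); rewrite xK zx => /eqP.
by apply/forallP=> z; apply/implyP=> xK; apply/implyP=> zx; apply/eqP; apply: H.
Qed.
Lemma group_set_HA : group_set HA.
Proof.
apply/group_setP; split.
  by apply/HAP=> x z _ _; rewrite !ffunE.
move=> f g /HAP Hf /HAP Hg; apply/HAP=> x z xK zx.
by rewrite !ffunE (Hf x z) // (Hg x z).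
Qed.
Canonical HA_group := Group group_set_HA.

Lemma HA_tof (h : Af) a : a \in K -> h \in HA -> tof h a \in HA.
Proof.
move=> aK /HAP Hh; apply/HAP=> x z xK zx; rewrite !tofE; apply: Hh.
  by apply/negP=> xaK; case/negP: xK; rewrite -(mulgKV a x) groupM.
by rewrite invMg invgK mulgA mulgKV.
Qed.

Hypothesis Z1 : 'Z([set: g0T]) = 1.
Hypothesis g0 : exists g : g0T, g != 1.
Hypothesis Knt : exists2 y, y \in K & y != 1.

Lemma key_a a x : (forall h, h \in HA -> (tof h a) ^ x \in HA) -> a \in K.
Proof.
move=> Hn; apply: contraT => aK.
case: g0 => g ng; case: Knt => y yK ny.
pose h : Af := [ffun z => if z == 1 then g else 1].
have hH : h \in HA.
  apply/HAP=> x0 z x0K zx; rewrite !ffunE.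
  have -> : (x0 == 1) = false by apply: contraNF x0K => /eqP ->.
  have -> : (z == 1) = false.
    apply: contraNF x0K => /eqP z1; move: zx; rewrite z1 mul1g.
    by rewrite groupV.
  by [].
move/HAP: (Hn h hH) => /(_ a (y * a) aK); rewrite mulgK => /(_ yK).
rewrite !conjg_Af !tofE mulgV mulgK !ffunE eqxx (negbTE ny).
by rewrite conj1g => /eqP; rewrite conjg_eq1 (negbTE ng).
Qed.

Lemma key_x a x : a \in K -> (forall h, h \in HA -> (tof h a) ^ x \in HA) -> x \in HA.
Proof.
move=> aK Hn; apply/HAP=> x0 z x0K zx.
suff: x x0 * (x z)^-1 \in 'Z([set: g0T]).
  by rewrite Z1 => /set1P /eqP; rewrite mulg_eq1 => /eqP ->; rewrite invgK.
apply/centerP; split; first by rewrite inE.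
move=> g _.
pose hg : Af := [ffun w => if w * x0^-1 \in K then g else 1].
have hgH : hg \in HA.
  apply/HAP=> x1 z1 x1K zx1; rewrite !ffunE.
  suff -> : (z1 * x0^-1 \in K) = (x1 * x0^-1 \in K) by [].
  by rewrite -(mulgKV x1 z1) -mulgA groupMl.
have := Hn (tof hg a^-1) (HA_tof (groupVr aK) hgH).
rewrite -tofM mulVg tof1 => /HAP /(_ x0 z x0K zx).
rewrite !conjg_Af !ffunE mulgV group1 zx => E.
have Hc : g ^ (x x0 * (x z)^-1) = g by rewrite conjgM E -conjgM mulgV conjg1.
move: Hc; rewrite /conjg => Hc.
by rewrite /commute -{1}Hc !mulgA mulgV mul1g.
Qed.

Local Notation s1 := (sdpair1 tof_groupAction).
Local Notation s2 := (sdpair2 tof_groupAction).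

Lemma s1_mem (h : Af) : (s1 h \in s1 @* HA) = (h \in HA).
Proof.
apply/idP/idP; last first.
 by move=> hH; apply: mem_morphim => //; rewrite inE.
move=> /morphimP[y _ yH E].
have := injmP (injm_sdpair1 tof_groupAction) y h (in_setT _) (in_setT _).
by move=> /(_ (esym E)) <-.
Qed.

Lemma Y_norm : s2 @* K \subset 'N(s1 @* HA).
Proof.
apply/subsetP=> u /morphimP[a _ aK ->].
rewrite inE -sdpair_setact ?inE ?subsetT //.
apply: morphimS; apply/subsetP=> w /imsetP[h hH ->].
exact: HA_tof.
Qed.

Lemma N_sdprod : (s1 @* HA) ><| (s2 @* K) = 'N_[set: Gam](s1 @* HA).
Proof.
rewrite sdprodE ?Y_norm //; last first.
  apply/eqP; rewrite -subG1 -(im_sdpair_TI tof_groupAction).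
  by apply: setISS; apply: morphimS; apply: subsetT.
apply/eqP; rewrite eqEsubset; apply/andP; split.
  rewrite mul_subG // subsetI ?subsetT ?normG ?Y_norm //.
apply/subsetP=> u /setIP[_ uN].
rewrite -(normC Y_norm) (sdpairE u).
have Hn : forall h, h \in HA -> (tof h u.1) ^ u.2 \in HA.
  move=> h hH; rewrite -s1_mem.
  have -> : s1 ((tof h u.1) ^ u.2) = (s1 h ^ s2 u.1) ^ s1 u.2.
    by rewrite (morphJ (sdpair1_morphism tof_groupAction)) ?in_setT //= -sdpair_act ?in_setT.
  by rewrite -conjgM -(sdpairE u) memJ_norm // s1_mem.
have aK := key_a Hn.
by rewrite mem_mulg //; apply: mem_morphim; rewrite ?in_setT // (key_x aK Hn).
Qed.
End C.

Theorem mainTheorem3 (g0T : finGroupType) (Gn : nat -> finGroupType)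
  (HG0simple : simple [set: g0T]) (HG0nab : ~~ abelian [set: g0T])
  (Huniv : forall hT : finGroupType,
      exists n : nat, (0 < n)%N /\ exists K : {group Gn n}, [set: hT] \isog K) :
  forall hT : finGroupType,
    exists n N : nat, (0 < n)%N /\ (0 < N)%N /\
      exists (gT : finGroupType) (Gamma M : {group gT}),
        [/\ M <| Gamma,
            M \isog [set: gpow g0T N],
            (Gamma / M) \isog [set: Gn n] &
            exists H : {group gT},
              H \subset Gamma /\ ('N_Gamma(H) / H) \isog [set: hT]].
Proof.
move=> hT; have [n [n0 [K iso]]] := Huniv hT.
pose kT := Gn n.
have Z1 : 'Z([set: g0T]) = 1.
  case/simpleP: HG0simple => _ /(_ ('Z([set: g0T]))%G (center_normal _)) [//|].
  by move/center_idP; rewrite (negbTE HG0nab).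
have g0 : exists g : g0T, g != 1.
  have : [set: g0T] != 1.
    by apply: contraNneq HG0nab => ->; apply: abelian1.
  by case/trivgPn=> g _ ng; exists g.
exists n, #|kT|; split=> //; split; first by apply/card_gt0P; exists 1.
exists (Gam g0T kT), [set: Gam g0T kT]%G, (sdpair1 (tof_groupAction g0T kT) @* [set: Af g0T kT])%G.
have sd := sdprod_sdpair (tof_groupAction g0T kT).
case/sdprod_context: (sd) => nM _ _ _ _.
split=> //.
- apply: isog_trans (Af_gpow g0T kT).
  exact: isog_symr (sub_isog (subsetT _) (injm_sdpair1 _)).
- apply: isog_trans (isog_symr (sdprod_isog sd)) _.
  exact: isog_symr (sub_isog (subsetT _) (injm_sdpair2 _)).
have [K1|Knt] := eqVneq (K :> {set kT}) 1.
  exists [set: Gam g0T kT]%G; split=> //.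
  rewrite (setIidPl (normG _)) trivg_quotient.
  apply: trivial_isog => //; apply/eqP; rewrite trivg_card1.
  by rewrite (card_isog iso) K1 cards1.
have Knt' : exists2 y, y \in K & y != 1 by case/trivgPn: Knt => y; exists y.
exists (sdpair1 (tof_groupAction g0T kT) @* HA g0T K)%G; split; first exact: subsetT.
apply: isog_trans (isog_symr (sdprod_isog (N_sdprod Z1 g0 Knt'))) _.
apply: isog_trans (isog_symr (sub_isog (subsetT _) (injm_sdpair2 _))) _.
exact: isog_symr iso.
Qed.
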